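(* Let $D$ be an integral domain with quotient field $K$ and $n\ge1$. The set $\mathrm{Int}_{T_n(K)}(T_n(D))$ of right integer-valued polynomials and the set $\mathrm{Int}^{\ell}_{T_n(K)}(T_n(D))$ of left integer-valued polynomials on $T_n(D)$ with coefficients in $T_n(K)$ are subrings of $(T_n(K))[x]$.
   Context: $T_n(A)$ denotes the ring of upper triangular $n\times n$ matrices over a ring $A$; $(T_n(K))[x]$ is the polynomial ring in a central variable $x$ with coefficients in $T_n(K)$. For $f=\sum_k F_kx^k\in(T_n(K))[x]$ and $C\in T_n(K)$, right substitution is $f(C)=\sum_kF_kC^k$ and left substitution is $f(C)_\ell=\sum_kC^kF_k$. $\mathrm{Int}_{T_n(K)}(T_n(D))=\{f\in(T_n(K))[x]\mid\forall C\in T_n(D):\ f(C)\in T_n(D)\}$ and $\mathrm{Int}^{\ell}_{T_n(K)}(T_n(D))=\{f\in(T_n(K))[x]\mid\forall C\in T_n(D):\ f(C)_\ell\in T_n(D)\}$. *)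

(* Defs.v *)
From HB Require Import structures.
From mathcomp Require Import all_boot all_order all_algebra.
Set Implicit Arguments. Unset Strict Implicit. Unset Printing Implicit Defensive.
Import Order.TTheory GRing.Theory Num.Theory.
Local Open Scope ring_scope.

Definition upper_tri (R : nzRingType) (n : nat) (A : 'M[R]_n) : Prop :=
  forall i j : 'I_n, (j < i)%N -> A i j = 0.

Definition inD (D : idomainType) (x : {fraction D}) : Prop :=
  exists d : D, x = FracField.tofrac d.

Definition in_TnD (D : idomainType) (m : nat) (C : 'M[{fraction D}]_m) : Prop :=
  upper_tri C /\ forall i j, inD (C i j).

Definition poly_TnK (K : nzRingType) (m : nat) (f : {poly 'M[K]_m.+1}) : Prop :=
  forall k : nat, upper_tri f`_k.

Definition rsubst (R : nzRingType) (f : {poly R}) (C : R) : R :=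
  \sum_(k < size f) f`_k * C ^+ k.

Definition lsubst (R : nzRingType) (f : {poly R}) (C : R) : R :=
  \sum_(k < size f) C ^+ k * f`_k.

Definition IntR (D : idomainType) (n : nat) (f : {poly 'M[{fraction D}]_n.+1}) : Prop :=
  poly_TnK f /\ forall C, in_TnD C -> in_TnD (rsubst f C).

Definition IntL (D : idomainType) (n : nat) (f : {poly 'M[{fraction D}]_n.+1}) : Prop :=
  poly_TnK f /\ forall C, in_TnD C -> in_TnD (lsubst f C).

Definition is_subring (R : nzRingType) (S : R -> Prop) : Prop :=
  [/\ S 1, forall u v, S u -> S v -> S (u - v) & forall u v, S u -> S v -> S (u * v)].

(* Main.v *)
Require Import Defs.
From HB Require Import structures.
From mathcomp Require Import all_boot all_order all_algebra.
From mathcomp Require Import zify.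
Set Implicit Arguments. Unset Strict Implicit. Unset Printing Implicit Defensive.
Import Order.TTheory GRing.Theory Num.Theory.
Local Open Scope ring_scope.

Section Ev.
Variable R : nzRingType.
Implicit Types (A B C : R) (f g h : {poly R}).

Definition ev A C f := \sum_(k < size f) f`_k * A * C ^+ k.
Definition evl A C f := \sum_(k < size f) C ^+ k * A * f`_k.

Lemma wide (F : nat -> R) f N : (size f <= N)%N -> (forall k, (size f <= k)%N -> F k = 0) ->
  \sum_(k < size f) F k = \sum_(k < N) F k.
Proof.
move=> hN hF; rewrite (big_ord_widen N F hN) big_mkcond /=.
apply: eq_bigr => i _; case: ifP => // /negbT; rewrite -leqNgt => h.
by rewrite hF.
Qed.

Lemma ev_wide A C f N : (size f <= N)%N -> ev A C f = \sum_(k < N) f`_k * A * C ^+ k.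
Proof. move=> h; rewrite /ev (@wide (fun k => f`_k * A * C ^+ k) f N h) // => k hk; by rewrite nth_default // !mul0r. Qed.
Lemma evl_wide A C f N : (size f <= N)%N -> evl A C f = \sum_(k < N) C ^+ k * A * f`_k.
Proof. move=> h; rewrite /evl (@wide (fun k => C ^+ k * A * f`_k) f N h) // => k hk; by rewrite nth_default // !mulr0. Qed.

Lemma ev_sub A C f g : ev A C (f - g) = ev A C f - ev A C g.
Proof.
set N := maxn (size f) (size g).
have hf : (size f <= N)%N by rewrite leq_maxl.
have hg : (size g <= N)%N by rewrite leq_maxr.
have hfg : (size (f - g)%R <= N)%N by rewrite (leq_trans (size_polyD _ _)) // size_polyN geq_max hf hg.
rewrite (ev_wide _ _ hf) (ev_wide _ _ hg) (ev_wide _ _ hfg) -sumrB.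
by apply: eq_bigr => i _; rewrite coefB !mulrBl.
Qed.
Lemma evl_sub A C f g : evl A C (f - g) = evl A C f - evl A C g.
Proof.
set N := maxn (size f) (size g).
have hf : (size f <= N)%N by rewrite leq_maxl.
have hg : (size g <= N)%N by rewrite leq_maxr.
have hfg : (size (f - g)%R <= N)%N by rewrite (leq_trans (size_polyD _ _)) // size_polyN geq_max hf hg.
rewrite (evl_wide _ _ hf) (evl_wide _ _ hg) (evl_wide _ _ hfg) -sumrB.
by apply: eq_bigr => i _; rewrite coefB !mulrBr.
Qed.
Lemma ev_add A C f g : ev A C (f + g) = ev A C f + ev A C g.
Proof.
set N := maxn (size f) (size g).
have hf : (size f <= N)%N by rewrite leq_maxl.
have hg : (size g <= N)%N by rewrite leq_maxr.
have hfg : (size (f + g)%R <= N)%N by rewrite (leq_trans (size_polyD _ _)).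
rewrite (ev_wide _ _ hf) (ev_wide _ _ hg) (ev_wide _ _ hfg) -big_split.
by apply: eq_bigr => i _; rewrite coefD !mulrDl.
Qed.
Lemma evl_add A C f g : evl A C (f + g) = evl A C f + evl A C g.
Proof.
set N := maxn (size f) (size g).
have hf : (size f <= N)%N by rewrite leq_maxl.
have hg : (size g <= N)%N by rewrite leq_maxr.
have hfg : (size (f + g)%R <= N)%N by rewrite (leq_trans (size_polyD _ _)).
rewrite (evl_wide _ _ hf) (evl_wide _ _ hg) (evl_wide _ _ hfg) -big_split.
by apply: eq_bigr => i _; rewrite coefD !mulrDr.
Qed.

Lemma size_mulX_le h : (size (h * 'X)%R <= (size h).+1)%N.
Proof.
rewrite (leq_trans (size_polyMleq _ _)) // size_polyX addn2 /=. done.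
Qed.

Lemma ev_mulX A C h : ev A C (h * 'X) = ev A C h * C.
Proof.
rewrite (ev_wide _ _ (size_mulX_le h)) big_ord_recl coefMX /= mul0r mul0r add0r.
rewrite (ev_wide _ _ (leqnn _)) mulr_suml; apply: eq_bigr => i _.
by rewrite coefMX /= exprSr !mulrA.
Qed.
Lemma evl_mulX A C h : evl A C (h * 'X) = C * evl A C h.
Proof.
rewrite (evl_wide _ _ (size_mulX_le h)) big_ord_recl coefMX /= mulr0 add0r.
rewrite (evl_wide _ _ (leqnn _)) mulr_sumr; apply: eq_bigr => i _.
by rewrite coefMX /= exprS !mulrA.
Qed.

Lemma size_CM c h : (size (c%:P * h)%R <= size h)%N.
Proof. move: (size_polyC_leq1 c) (size_polyMleq (c%:P) h); lia. Qed.
Lemma size_MC c h : (size (h * c%:P)%R <= size h)%N.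
Proof. move: (size_polyC_leq1 c) (size_polyMleq h (c%:P)); lia. Qed.

Lemma ev_CM A C c h : ev A C (c%:P * h) = c * ev A C h.
Proof.
rewrite (ev_wide _ _ (size_CM c h)) /ev mulr_sumr; apply: eq_bigr => i _.
by rewrite coefCM !mulrA.
Qed.
Lemma evl_MC A C c h : evl A C (h * c%:P) = evl A C h * c.
Proof.
rewrite (evl_wide _ _ (size_MC c h)) /evl mulr_suml; apply: eq_bigr => i _.
by rewrite coefMC !mulrA.
Qed.
Lemma ev_C B C c : ev B C c%:P = c * B.
Proof. by rewrite (ev_wide _ _ (size_polyC_leq1 c)) big_ord1 coefC /= expr0 mulr1. Qed.
Lemma evl_C B C c : evl B C c%:P = B * c.
Proof. by rewrite (evl_wide _ _ (size_polyC_leq1 c)) big_ord1 coefC /= expr0 mul1r. Qed.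

Lemma ev_mul A C f g : ev A C (f * g) = ev (ev A C g) C f.
Proof.
elim/poly_ind: f => [|p c IH]; first by rewrite mul0r /ev size_poly0 !big_ord0.
rewrite mulrDl -mulrA -(commr_polyX g) mulrA ev_add ev_mulX IH ev_CM.
by rewrite ev_add ev_mulX ev_C.
Qed.
Lemma evl_mul A C f g : evl A C (f * g) = evl (evl A C f) C g.
Proof.
elim/poly_ind: g => [|p c IH]; first by rewrite mulr0 /evl size_poly0 !big_ord0.
rewrite mulrDr mulrA evl_add evl_mulX IH evl_MC.
by rewrite evl_add evl_mulX evl_C.
Qed.
End Ev.

Section Mx.
Variables (D : idomainType) (n : nat).
Local Notation K := {fraction D}.
Local Notation M := 'M[K]_n.+1.
Implicit Types (A B C X Y : M).
Local Notation inD := (@inD D).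

Lemma inD0 : inD (0 : K). Proof. by exists 0; rewrite rmorph0. Qed.
Lemma inD1 : inD (1 : K). Proof. by exists 1; rewrite rmorph1. Qed.
Lemma inDnat b : inD (b%:R : K). Proof. by exists b%:R; rewrite rmorph_nat. Qed.
Lemma inDB x y : inD x -> inD y -> inD (x - y).
Proof. by move=> [a ->] [b ->]; exists (a - b); rewrite rmorphB. Qed.
Lemma inDD x y : inD x -> inD y -> inD (x + y).
Proof. by move=> [a ->] [b ->]; exists (a + b); rewrite rmorphD. Qed.
Lemma inDM x y : inD x -> inD y -> inD (x * y).
Proof. by move=> [a ->] [b ->]; exists (a * b); rewrite rmorphM. Qed.
Lemma inD_sum m (F : 'I_m -> K) : (forall i, inD (F i)) -> inD (\sum_i F i).
Proof. by move=> h; apply: big_ind => //; [exact: inD0 | exact: inDD]. Qed.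

Lemma TnD0 : in_TnD (0 : M). Proof. by split=> [i j _|i j]; rewrite mxE //; apply: inD0. Qed.
Lemma TnD_diag (d : 'rV[K]_n.+1) : (forall i, inD (d 0 i)) -> in_TnD (diag_mx d).
Proof.
move=> h; split=> [i j ji|i j]; rewrite mxE.
  by rewrite (_ : (i == j) = false) // ; apply/negbTE; rewrite neq_ltn ji orbT.
by case: (i == j); [apply: h | apply: inD0].
Qed.
Lemma TnD1 : in_TnD (1 : M).
Proof. split=> [i j ji|i j]; rewrite mxE.
  by rewrite (_ : (i == j) = false) //; apply/negbTE; rewrite neq_ltn ji orbT.
exact: inDnat.
Qed.
Lemma TnDB X Y : in_TnD X -> in_TnD Y -> in_TnD (X - Y).
Proof.
move=> [uX iX] [uY iY]; split=> [i j ji|i j]; rewrite !mxE.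
  by rewrite uX // uY // subr0.
exact: inDB.
Qed.
Lemma TnDD X Y : in_TnD X -> in_TnD Y -> in_TnD (X + Y).
Proof.
move=> [uX iX] [uY iY]; split=> [i j ji|i j]; rewrite !mxE.
  by rewrite uX // uY // addr0.
exact: inDD.
Qed.
Lemma TnDZ a X : inD a -> in_TnD X -> in_TnD (a *: X).
Proof.
move=> ha [uX iX]; split=> [i j ji|i j]; rewrite !mxE.
  by rewrite uX // mulr0.
exact: inDM.
Qed.
Lemma TnDM X Y : in_TnD X -> in_TnD Y -> in_TnD (X * Y).
Proof.
move=> [uX iX] [uY iY]; split=> [i j ji|i j]; rewrite !mxE.
  apply: big1 => l _; case: (ltnP l i) => hl; first by rewrite uX // mul0r.
  by rewrite uY ?mulr0 // (leq_trans ji).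
by apply: inD_sum => l; apply: inDM.
Qed.
Lemma TnDX X k : in_TnD X -> in_TnD (X ^+ k).
Proof. by move=> h; elim: k => [|k IH]; [rewrite expr0; exact: TnD1 | rewrite exprS; exact: TnDM]. Qed.
Lemma TnD_sum m (F : 'I_m -> M) : (forall i, in_TnD (F i)) -> in_TnD (\sum_i F i).
Proof. by move=> h; apply: big_ind => //; [exact: TnD0 | exact: TnDD]. Qed.


Lemma ev_addA X Y C f : ev (X + Y) C f = ev X C f + ev Y C f.
Proof. by rewrite /ev -big_split; apply: eq_bigr => i _; rewrite mulrDr mulrDl. Qed.
Lemma ev_subA X Y C f : ev (X - Y) C f = ev X C f - ev Y C f.
Proof. by rewrite /ev -sumrB; apply: eq_bigr => i _; rewrite mulrBr mulrBl. Qed.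
Lemma ev_scaleA a X C f : ev (a *: X) C f = a *: ev X C f.
Proof. by rewrite /ev scaler_sumr; apply: eq_bigr => i _; rewrite -scalerAr -scalerAl. Qed.
Lemma evl_addA X Y C f : evl (X + Y) C f = evl X C f + evl Y C f.
Proof. by rewrite /evl -big_split; apply: eq_bigr => i _; rewrite mulrDr mulrDl. Qed.
Lemma evl_subA X Y C f : evl (X - Y) C f = evl X C f - evl Y C f.
Proof. by rewrite /evl -sumrB; apply: eq_bigr => i _; rewrite mulrBr mulrBl. Qed.
Lemma evl_scaleA a X C f : evl (a *: X) C f = a *: evl X C f.
Proof. by rewrite /evl scaler_sumr; apply: eq_bigr => i _; rewrite -scalerAr -scalerAl. Qed.

Lemma ev_intertw A B C f : A * C = B * A -> ev A C f = rsubst f B * A.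
Proof.
move=> h; have hk k : A * C ^+ k = B ^+ k * A.
  elim: k => [|k IH]; first by rewrite !expr0 mulr1 mul1r.
  by rewrite exprSr mulrA IH -mulrA h mulrA -exprSr.
by rewrite /ev /rsubst mulr_suml; apply: eq_bigr => i _; rewrite -mulrA hk mulrA.
Qed.
Lemma evl_intertw A B C f : C * A = A * B -> evl A C f = A * lsubst f B.
Proof.
move=> h; have hk k : C ^+ k * A = A * B ^+ k.
  elim: k => [|k IH]; first by rewrite !expr0 mulr1 mul1r.
  by rewrite exprS -mulrA IH mulrA h -mulrA -exprS.
by rewrite /evl /lsubst mulr_sumr; apply: eq_bigr => i _; rewrite mulrA hk.
Qed.

Lemma TnD_delta (i j : 'I_n.+1) : (i <= j)%N -> in_TnD (delta_mx i j : M).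
Proof.
move=> hij; split=> [a b ba|a b]; rewrite mxE; last exact: inDnat.
case: (eqVneq a i) => [ea|]; case: (eqVneq b j) => [eb|] //=.
by move: ba hij; rewrite ea eb => ba; rewrite leqNgt ba.
Qed.

Definition Pm (k : nat) : M := diag_mx (\row_(i < n.+1) ((k <= i)%N)%:R).
Definition Qm (k : nat) : M := diag_mx (\row_(i < n.+1) ((i < k)%N)%:R).

Lemma TnD_Pm k : in_TnD (Pm k). Proof. by apply: TnD_diag => i; rewrite mxE; apply: inDnat. Qed.
Lemma TnD_Qm k : in_TnD (Qm k). Proof. by apply: TnD_diag => i; rewrite mxE; apply: inDnat. Qed.

Lemma Pm_C k C : upper_tri C -> Pm k * C = Pm k * C * Pm k.
Proof.
move=> uC; apply/matrixP=> a b; rewrite -!mulmxE mul_mx_diag !mul_diag_mx !mxE.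
case: (ltnP b a) => h; first by rewrite (uC _ _ h) !mulr0 mul0r.
case: (leqP k a) => hk /=; last by rewrite !mul0r.
by rewrite (leq_trans hk h) mulr1.
Qed.
Lemma C_Qm k C : upper_tri C -> C * Qm k = Qm k * C * Qm k.
Proof.
move=> uC; apply/matrixP=> a b; rewrite -!mulmxE !mul_mx_diag !mul_diag_mx !mxE.
case: (ltnP b a) => h; first by rewrite (uC _ _ h) !mulr0 mul0r.
case: (ltnP b k) => hk /=; last by rewrite !mulr0.
by rewrite (leq_ltn_trans h hk) mul1r.
Qed.
Lemma Pm_idem k : Pm k * Pm k = Pm k.
Proof.
apply/matrixP=> a b; rewrite -mulmxE mul_diag_mx !mxE.
by case: (k <= a)%N; rewrite ?mul1r ?mul0r ?mul0rn.
Qed.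
Lemma Qm_idem k : Qm k * Qm k = Qm k.
Proof.
apply/matrixP=> a b; rewrite -mulmxE mul_diag_mx !mxE.
by case: (a < k)%N; rewrite ?mul1r ?mul0r ?mul0rn.
Qed.
Lemma delta_Pm (i : 'I_n.+1) : delta_mx i i = Pm i - Pm i.+1.
Proof.
apply/matrixP=> a b; rewrite !mxE.
case: (eqVneq a b) => [<-|nab].
  rewrite andbb !mulr1n; case: (ltngtP i a) => h.
  - by rewrite -val_eqE /= (gtn_eqF h) subrr.
  - by rewrite -val_eqE /= (ltn_eqF h) subrr.
  - by rewrite -val_eqE /= h eqxx subr0.
rewrite !mulr0n subrr; case: (eqVneq a i) => [ea|] //=.
by case: (eqVneq b i) => [eb|] //=; case/eqP: nab; rewrite ea eb.
Qed.
Lemma delta_Qm (i : 'I_n.+1) : delta_mx i i = Qm i.+1 - Qm i.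
Proof.
apply/matrixP=> a b; rewrite !mxE.
case: (eqVneq a b) => [<-|nab].
  rewrite andbb !mulr1n; case: (ltngtP i a) => h.
  - by rewrite -val_eqE /= (gtn_eqF h) ltnS leqNgt h subr0.
  - by rewrite -val_eqE /= (ltn_eqF h) ltnS (ltnW h) subrr.
  - by rewrite -val_eqE /= h eqxx ltnSn subr0.
rewrite !mulr0n subrr; case: (eqVneq a i) => [ea|] //=.
by case: (eqVneq b i) => [eb|] //=; case/eqP: nab; rewrite ea eb.
Qed.

Lemma VU (i j : 'I_n.+1) : i != j ->
  (1 - delta_mx i j : M) * (1 + delta_mx i j) = 1.
Proof.
move=> hij; rewrite mulrBl !mulrDr !mul1r mulr1 -mulmxE mul_delta_mx_0 ?addr0 ?addrK //.
by rewrite eq_sym.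
Qed.
Lemma UV (i j : 'I_n.+1) : i != j ->
  (1 + delta_mx i j : M) * (1 - delta_mx i j) = 1.
Proof.
move=> hij; rewrite mulrDl !mulrBr !mul1r mulr1 -mulmxE mul_delta_mx_0 ?subr0 ?subrK //.
by rewrite eq_sym.
Qed.

Lemma ev_from X U I C f : in_TnD (ev U C f) -> in_TnD (ev I C f) -> U = X + I -> in_TnD (ev X C f).
Proof. by move=> hU hI e; move: hU; rewrite e ev_addA => hU; have := TnDB hU hI; rewrite addrK. Qed.
Lemma evl_from X U I C f : in_TnD (evl U C f) -> in_TnD (evl I C f) -> U = X + I -> in_TnD (evl X C f).
Proof. by move=> hU hI e; move: hU; rewrite e evl_addA => hU; have := TnDB hU hI; rewrite addrK. Qed.

Lemma strongR f A C : IntR f -> in_TnD A -> in_TnD C -> in_TnD (ev A C f).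
Proof.
move=> [_ hf] hA hC.
have key X B : in_TnD X -> in_TnD B -> X * C = B * X -> in_TnD (ev X C f).
  by move=> hX hB e; rewrite (ev_intertw f e); apply: TnDM => //; apply: hf.
have ev1 : in_TnD (ev 1 C f).
  by rewrite (_ : ev 1 C f = rsubst f C); [apply: hf | apply: eq_bigr => k _; rewrite mulr1].
rewrite (matrix_sum_delta A).
apply: (@big_ind _ (fun X => in_TnD (ev X C f))).
- by rewrite /ev; under eq_bigr do rewrite mulr0 mul0r; rewrite big1 //; apply: TnD0.
- by move=> X Y hX hY; rewrite ev_addA; apply: TnDD.
move=> i _.
apply: (@big_ind _ (fun X => in_TnD (ev X C f))).
- by rewrite /ev; under eq_bigr do rewrite mulr0 mul0r; rewrite big1 //; apply: TnD0.
- by move=> X Y hX hY; rewrite ev_addA; apply: TnDD.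
move=> j _; rewrite ev_scaleA.
case: (ltngtP i j) => hij.
- apply: TnDZ; first exact: hA.2.
  have ne : i != j by rewrite neq_ltn hij.
  apply: (@ev_from _ (1 + delta_mx i j) 1); last exact: addrC; last exact: ev1.
  have hU : in_TnD (1 + delta_mx i j : M) by apply: TnDD; [apply: TnD1 | apply: TnD_delta; apply: ltnW].
  have hV : in_TnD (1 - delta_mx i j : M) by apply: TnDB; [apply: TnD1 | apply: TnD_delta; apply: ltnW].
  apply: (key _ ((1 + delta_mx i j) * C * (1 - delta_mx i j))) => //.
    by apply: TnDM => //; apply: TnDM.
  by rewrite -mulrA VU // mulr1.
- by rewrite (proj1 hA _ _ hij) scale0r; apply: TnD0.
- apply: TnDZ; first exact: hA.2.
  have -> : j = i by apply: val_inj.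
  rewrite delta_Pm ev_subA; apply: TnDB.
  + apply: (key _ (Pm i * C * Pm i)); first exact: TnD_Pm.
      by apply: TnDM; [apply: TnDM => //; apply: TnD_Pm | apply: TnD_Pm].
    by rewrite -mulrA Pm_idem -Pm_C //; case: hC.
  + apply: (key _ (Pm i.+1 * C * Pm i.+1)); first exact: TnD_Pm.
      by apply: TnDM; [apply: TnDM => //; apply: TnD_Pm | apply: TnD_Pm].
    by rewrite -mulrA Pm_idem -Pm_C //; case: hC.
Qed.

Lemma strongL f A C : IntL f -> in_TnD A -> in_TnD C -> in_TnD (evl A C f).
Proof.
move=> [_ hf] hA hC.
have key X B : in_TnD X -> in_TnD B -> C * X = X * B -> in_TnD (evl X C f).
  by move=> hX hB e; rewrite (evl_intertw f e); apply: TnDM => //; apply: hf.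
have ev1 : in_TnD (evl 1 C f).
  by rewrite (_ : evl 1 C f = lsubst f C); [apply: hf | apply: eq_bigr => k _; rewrite mulr1].
rewrite (matrix_sum_delta A).
apply: (@big_ind _ (fun X => in_TnD (evl X C f))).
- by rewrite /evl; under eq_bigr do rewrite mulr0 mul0r; rewrite big1 //; apply: TnD0.
- by move=> X Y hX hY; rewrite evl_addA; apply: TnDD.
move=> i _.
apply: (@big_ind _ (fun X => in_TnD (evl X C f))).
- by rewrite /evl; under eq_bigr do rewrite mulr0 mul0r; rewrite big1 //; apply: TnD0.
- by move=> X Y hX hY; rewrite evl_addA; apply: TnDD.
move=> j _; rewrite evl_scaleA.
case: (ltngtP i j) => hij.
- apply: TnDZ; first exact: hA.2.
  have ne : i != j by rewrite neq_ltn hij.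
  apply: (@evl_from _ (1 + delta_mx i j) 1); last exact: addrC; last exact: ev1.
  have hU : in_TnD (1 + delta_mx i j : M) by apply: TnDD; [apply: TnD1 | apply: TnD_delta; apply: ltnW].
  have hV : in_TnD (1 - delta_mx i j : M) by apply: TnDB; [apply: TnD1 | apply: TnD_delta; apply: ltnW].
  apply: (key _ ((1 - delta_mx i j) * C * (1 + delta_mx i j))) => //.
    by apply: TnDM => //; apply: TnDM.
  by rewrite !mulrA UV // mul1r.
- by rewrite (proj1 hA _ _ hij) scale0r; apply: TnD0.
- apply: TnDZ; first exact: hA.2.
  have -> : j = i by apply: val_inj.
  rewrite delta_Qm evl_subA; apply: TnDB.
  + apply: (key _ (Qm i.+1 * C * Qm i.+1)); first exact: TnD_Qm.
      by apply: TnDM; [apply: TnDM => //; apply: TnD_Qm | apply: TnD_Qm].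
    by rewrite !mulrA Qm_idem -C_Qm //; case: hC.
  + apply: (key _ (Qm i * C * Qm i)); first exact: TnD_Qm.
      by apply: TnDM; [apply: TnDM => //; apply: TnD_Qm | apply: TnD_Qm].
    by rewrite !mulrA Qm_idem -C_Qm //; case: hC.
Qed.

Lemma polyT_sub (f g : {poly M}) : poly_TnK f -> poly_TnK g -> poly_TnK (f - g).
Proof. by move=> hf hg k a b ba; rewrite coefB !mxE hf // hg // subr0. Qed.
Lemma upper_mul X Y : upper_tri X -> upper_tri Y -> upper_tri (X * Y).
Proof.
move=> uX uY i j ji; rewrite !mxE.
apply: big1 => l _; case: (ltnP l i) => hl; first by rewrite uX // mul0r.
by rewrite uY ?mulr0 // (leq_trans ji).
Qed.
Lemma polyT_mul (f g : {poly M}) : poly_TnK f -> poly_TnK g -> poly_TnK (f * g).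
Proof.
move=> hf hg k a b ba; rewrite coefM summxE.
by apply: big1 => l _; rewrite upper_mul.
Qed.
Lemma polyT_1 : @poly_TnK K n 1.
Proof.
move=> k a b ba; rewrite coef1; case: (k == 0%N).
  by rewrite mulr1n; exact: (proj1 TnD1 a b ba).
by rewrite mulr0n mxE.
Qed.
End Mx.

Theorem theorem5p4 (D : idomainType) (n : nat) :
  is_subring (@IntR D n) /\ is_subring (@IntL D n).
Proof.
split; split.
- split; first exact: polyT_1.
  move=> C hC; rewrite (_ : rsubst 1 C = 1); first exact: TnD1.
  by rewrite /rsubst size_poly1 big_ord1 coef1 /= mul1r.
- move=> u v [hu1 hu2] [hv1 hv2]; split; first exact: polyT_sub.
  move=> C hC; rewrite (_ : rsubst (u - v) C = ev 1 C (u - v)).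
    by rewrite ev_sub; apply: TnDB; [apply: strongR | apply: strongR] => //; apply: TnD1.
  by apply: eq_bigr => k _; rewrite mulr1.
- move=> u v [hu1 hu2] [hv1 hv2]; split; first exact: polyT_mul.
  move=> C hC; rewrite (_ : rsubst (u * v) C = ev 1 C (u * v)).
    rewrite ev_mul; apply: strongR => //.
    by rewrite (_ : ev 1 C v = rsubst v C); [apply: hv2 | apply: eq_bigr => k _; rewrite mulr1].
  by apply: eq_bigr => k _; rewrite mulr1.
- split; first exact: polyT_1.
  move=> C hC; rewrite (_ : lsubst 1 C = 1); first exact: TnD1.
  by rewrite /lsubst size_poly1 big_ord1 coef1 /= mul1r.
- move=> u v [hu1 hu2] [hv1 hv2]; split; first exact: polyT_sub.
  move=> C hC; rewrite (_ : lsubst (u - v) C = evl 1 C (u - v)).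
    by rewrite evl_sub; apply: TnDB; apply: strongL => //; apply: TnD1.
  by apply: eq_bigr => k _; rewrite mulr1.
- move=> u v [hu1 hu2] [hv1 hv2]; split; first exact: polyT_mul.
  move=> C hC; rewrite (_ : lsubst (u * v) C = evl 1 C (u * v)).
    rewrite evl_mul; apply: strongL => //.
    by rewrite (_ : evl 1 C u = lsubst u C); [apply: hu2 | apply: eq_bigr => k _; rewrite mulr1].
  by apply: eq_bigr => k _; rewrite mulr1.
Qed.
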